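(* Let $\mathrm{G}$ be a finite undirected graph with vertex set $\mathrm{V}(\mathrm{G})$ of size $N$, with no isolated vertices, maximum degree $d_{\max}$ and minimum degree $d_{\min}$. Let $0 \le \lambda \le 1$ and $0 < p < 1$, and let $\mathcal{K}^{\lambda,0}_p(\mathrm{G}) = [\mathrm{K}^{\lambda,0}_p(k,l)]_{k,l\in\mathrm{V}(\mathrm{G})}$. Then, with $\rho = (1-p)\lambda$ and $\Gamma(\mathbf{A}) = \sum_{i=0}^\infty (i+1)\mathbf{A}^i$, the entrywise inequalities $$\Gamma\!\left(\frac{\rho}{d_{\max}}\mathrm{Adj}(\mathrm{G})\right) \le \mathcal{K}^{\lambda,0}_p(\mathrm{G}) \le \Gamma\!\left(\frac{\rho}{d_{\min}}\mathrm{Adj}(\mathrm{G})\right)$$ hold (series with nonnegative entries are interpreted entrywise in $[0,\infty]$).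
   Context: A random walk $\omega(h)$ with stopping probability $p$ starting at $h$ is the sequence $(j_1 = h, j_2, \dots, j_t)$ where, independently at each step, the walk stops with probability $p$ and otherwise moves from its current vertex to a uniformly random neighbour. A prefix sub-walk of $(j_1,\dots,j_t)$ is a walk $(j_1,\dots,j_r)$ with $1\le r\le t$ (or the empty walk); its length is its number of edges $r-1$. The frequency vector $f^{\omega(h),\lambda}_h \in \mathbb{R}^{\mathrm{V}(\mathrm{G})}$ is $f^{\omega(h),\lambda}_h(i) = \sum_{e\in \mathrm{L}^{\omega(h)}(i)} \lambda^e$, where $\mathrm{L}^{\omega(h)}(i)$ is the multiset of lengths of the prefix sub-walks of $\omega(h)$ that end at $i$. For independent random walks $\omega(k),\omega(l)$ with stopping probability $p$ started at $k$ and $l$, the kernel (with $\alpha = 0$) is $\mathrm{K}^{\lambda,0}_p(k,l) = \mathbb{E}_{\omega(k)}[f^{\omega(k),\lambda}_k]\,\big(\mathbb{E}_{\omega(l)}[f^{\omega(l),\lambda}_l]\big)^\top$. $\mathrm{Adj}(\mathrm{G})$ is the adjacency matrix. *)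

(* Defs.v *)
From HB Require Import structures.
From mathcomp Require Import all_boot all_order all_algebra.
From mathcomp Require Import all_classical all_reals all_analysis.
Set Implicit Arguments. Unset Strict Implicit. Unset Printing Implicit Defensive.
Import Order.TTheory GRing.Theory Num.Theory.
Local Open Scope ring_scope.

(* A finite simple undirected graph on vertex set 'I_n is a symmetric,
   irreflexive relation e. *)
Section Graph.
Variables (n : nat) (e : rel 'I_n).

Definition vdeg (v : 'I_n) : nat := #|[set u | e v u]|.
Definition max_deg : nat := \max_(v : 'I_n) vdeg v.
Definition min_deg : nat := \big[minn/max_deg]_(v : 'I_n) vdeg v.

Variable R : realType.

Definition adjmx : 'M[R]_n := \matrix_(i, j) (e i j)%:R.

(* Law of the random walk omega(h) with stopping probability p:
   the walk (j_1 = h, j_2, ..., j_t) has probability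
   (1-p)^(t-1) * p * prod_{s<t} 1/vdeg(j_s) if consecutive vertices are adjacent,
   and 0 otherwise. Walks are represented by nonempty sequences. *)
Definition walk_prob (p : R) (h : 'I_n) (s : seq 'I_n) : R :=
  match s with
  | [::] => 0
  | j1 :: rest =>
      if (j1 == h) && path e j1 rest then
        (1 - p) ^+ size rest * p * \prod_(j <- belast j1 rest) ((vdeg j)%:R)^-1
      else 0
  end.

(* frequency vector f^{omega,lambda}_h(i) = sum over prefix sub-walks ending at i
   of lambda^(length); the prefix (j_1..j_{r+1}) has length r. *)
Definition freq (lam : R) (s : seq 'I_n) (i : 'I_n) : R :=
  \sum_(r < size s | nth i s r == i) lam ^+ r.

Definition exp_freq (p lam : R) (h i : 'I_n) : \bar R :=
  \esum_(s in [set: seq 'I_n]) (walk_prob p h s * freq lam s i)%:E.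

Definition rw_kernel (p lam : R) (k l : 'I_n) : \bar R :=
  (\sum_(i : 'I_n) exp_freq p lam k i * exp_freq p lam l i)%E.

Definition Gamma_adj (c : R) (k l : 'I_n) : \bar R :=
  (\sum_(i <oo) (((i.+1)%:R * ((c *: adjmx) ^+ i) k l)%:E))%E.

End Graph.

(* Main.v *)
Require Import Defs.
From HB Require Import structures.
From mathcomp Require Import all_boot all_order all_algebra.
From mathcomp Require Import all_classical all_reals all_analysis.
From mathcomp Require Import ring lra.
Import Order.TTheory GRing.Theory Num.Theory.
Import numFieldNormedType.Exports.
Local Open Scope classical_set_scope.
Local Open Scope ring_scope.

Section Series.
Variable R : realType.
Local Open Scope ereal_scope.

Lemma ser_fin_supp (f : nat -> \bar R) m : (forall r, 0 <= f r) ->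
  \sum_(r <oo) (if (r <= m)%N then f r else 0) = \sum_(r < m.+1) f r.
Proof.
move=> f0.
rewrite (nneseries_split 0 m.+1); last by move=> k _; case: ifP.
rewrite add0n eseries0 ?adde0; last by move=> k; rewrite ltnNge => /negPf ->.
by rewrite big_mkord; apply: eq_bigr => r _; rewrite -ltnS ltn_ord.
Qed.

Lemma ser_shift (f : nat -> \bar R) r : (forall k, 0 <= f k) ->
  \sum_(m <oo) (if (r <= m)%N then f (m - r)%N else 0) = \sum_(s <oo) f s.
Proof.
move=> f0; set g := fun m => if (r <= m)%N then f (m - r)%N else 0.
have g0 k : 0 <= g k by rewrite /g; case: ifP.
transitivity (\sum_(r <= s <oo) g s).
  rewrite [RHS]ereal_series [RHS]eseries_mkcond.
  by apply: eq_eseriesr => k _; rewrite /g; case: ifP.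
rewrite -nneseries_addn //.
by apply: eq_eseriesr => s _; rewrite /g leq_addl addnK.
Qed.

Lemma ser_geom (p : R) : (0 < p)%R -> (p < 1)%R ->
  \sum_(u <oo) (p * (1 - p) ^+ u)%:E = 1.
Proof.
move=> p0 p1.
have h1 : (`|1 - p| < 1)%R by rewrite ger0_norm; lra.
have cg := @cvg_geometric_series R p _ h1.
transitivity (limn (EFin \o series (geometric p (1 - p)))).
  apply/congr_lim/funext => k /=.
  by rewrite /series /= sumEFin.
rewrite EFin_lim; last exact: is_cvg_geometric_series.
have -> : limn (series (geometric p (1 - p))) = (p / (1 - (1 - p)))%R.
  by apply: cvg_lim.
by congr EFin; field; lra.
Qed.

Lemma ser_mul (a b : nat -> R) : (forall r, 0 <= a r)%R -> (forall s, 0 <= b s)%R ->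
  (\sum_(r <oo) (a r)%:E) * (\sum_(s <oo) (b s)%:E) =
  \sum_(r <oo) \sum_(s <oo) (a r * b s)%:E.
Proof.
move=> a0 b0; set Y := \sum_(s <oo) (b s)%:E.
have Y0 : 0 <= Y by apply: nneseries_ge0 => s _ _; rewrite lee_fin.
transitivity (\sum_(r <oo) ((a r)%:E * Y)); last first.
  apply: eq_eseriesr => r _; rewrite /Y -nneseriesZl; last by move=> s _; rewrite lee_fin.
  by apply: eq_eseriesr => s _; rewrite EFinM.
have [Yfin|Ynfin] := boolP (Y \is a fin_num).
  rewrite -(fineK Yfin) muleC -nneseriesZl; last by move=> r _; rewrite lee_fin.
  by apply: eq_eseriesr => r _; rewrite muleC.
have Yoo : Y = +oo.
  by move: Ynfin Y0; case: (Y) => //= y; rewrite leNye.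
rewrite Yoo.
have [[r ar]|none] := pselect (exists r, (0 < a r)%R).
  have S0 : 0 < \sum_(r <oo) (a r)%:E.
    apply: (@lt_le_trans _ _ (a r)%:E); first by rewrite lte_fin.
    apply: le_trans (nneseries_lim_ge r.+1 _); last by move=> k _ _; rewrite lee_fin.
    by rewrite big_nat_recr //= leeDr // sume_ge0 // => k _; rewrite lee_fin.
  rewrite gt0_muley //; apply/esym/(nneseries_pinfty (k := r)) => //.
    by move=> k _; rewrite mule_ge0 // lee_fin.
  by rewrite mulry /= gtr0_sg // mul1e.
have az r : a r = 0%R.
  by apply/eqP; rewrite eq_le a0 andbT leNgt; apply/negP => ar; apply: none; exists r.
rewrite (_ : \sum_(r <oo) (a r)%:E = 0); last by rewrite eseries0 // => k _ _; rewrite az.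
by rewrite mul0e eseries0 // => k _ _; rewrite az mul0e.
Qed.

End Series.

Section Series2.
Variable R : realType.
Local Open Scope ereal_scope.

Lemma ser_diag (b : nat -> nat -> \bar R) : (forall r s, 0 <= b r s) ->
  \sum_(r <oo) \sum_(s <oo) b r s = \sum_(m <oo) \sum_(r < m.+1) b r (m - r)%N.
Proof.
move=> b0.
transitivity (\sum_(r <oo) \sum_(m <oo) (if (r <= m)%N then b r (m - r)%N else 0)).
  by apply: eq_eseriesr => r _; rewrite (@ser_shift R (b r)).
rewrite nneseries_interchange; last by move=> r m; case: ifP.
by apply: eq_eseriesr => m _; rewrite (@ser_fin_supp R (fun r => b r (m - r)%N)).
Qed.

End Series2.

Lemma bigmin_le (I : eqType) (r : seq I) x0 (F : I -> nat) v :
  v \in r -> (\big[minn/x0]_(y <- r) F y <= F v)%N.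
Proof.
elim: r => // y r IH; rewrite inE big_cons => /predU1P[->|/IH H].
  exact: geq_minl.
exact: leq_trans (geq_minr _ _) H.
Qed.

Section Mx.
Variables (R : realType) (n : nat).
Implicit Types A B C D : 'M[R]_n.

Lemma mxnn_exp A k : (forall i j, 0 <= A i j) -> forall i j, 0 <= (A ^+ k) i j.
Proof.
move=> A0; elim: k => [|k IH] i j; first by rewrite expr0 mxE ler0n.
by rewrite exprS -mulmxE mxE; apply: sumr_ge0 => y _; rewrite mulr_ge0.
Qed.

Lemma mxle_exp A B k : (forall i j, 0 <= A i j) -> (forall i j, A i j <= B i j) ->
  forall i j, (A ^+ k) i j <= (B ^+ k) i j.
Proof.
move=> A0 AB; elim: k => [|k IH] i j; first by [].
rewrite !exprS -!mulmxE !mxE; apply: ler_sum => y _.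
by rewrite ler_pM // mxnn_exp.
Qed.

Lemma mxle_mul A B C D : (forall i j, 0 <= A i j) -> (forall i j, 0 <= C i j) ->
  (forall i j, A i j <= B i j) -> (forall i j, C i j <= D i j) ->
  forall i j, (A *m C) i j <= (B *m D) i j.
Proof.
move=> A0 C0 AB CD i j; rewrite !mxE; apply: ler_sum => y _.
by rewrite ler_pM.
Qed.

Lemma trmxX A k : (A ^+ k)^T = A^T ^+ k.
Proof.
elim: k => [|k IH]; first by rewrite !expr0; apply/matrixP => i j; rewrite !mxE eq_sym.
by rewrite exprS exprSr -!mulmxE trmx_mul IH.
Qed.

Lemma scale_exp c A k : (c *: A) ^+ k = c ^+ k *: A ^+ k.
Proof.
elim: k => [|k IH]; first by rewrite !expr0 scale1r.
rewrite !exprS IH -!mulmxE; apply/matrixP => i j; rewrite !mxE mulr_sumr; apply: eq_bigr => y _; rewrite !mxE; ring.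
Qed.

End Mx.


Lemma fsum_distr (R : realType) (T : choiceType) (A : set T) (f : T -> \bar R) (c : R) :
  finite_set A -> (forall a, A a -> (0 <= f a)%E) ->
  (\sum_(a \in A) (c%:E * f a) = c%:E * \sum_(a \in A) f a)%E.
Proof.
move=> fA f0; rewrite !fsbig_finite //= big_seq [in RHS]big_seq.
rewrite ge0_sume_distrr // => a; rewrite in_fset_set // inE; exact: f0.
Qed.

Lemma esumZl (R : realType) (T : choiceType) (S : set T) (f : T -> \bar R) (c : R) :
  0 <= c -> (forall a, S a -> (0 <= f a)%E) ->
  (\esum_(a in S) (c%:E * f a) = c%:E * \esum_(a in S) f a)%E.
Proof.
move=> c0 f0; rewrite /esum -ereal_supZl //; last first.
  by apply/set0P; exists 0%E; exists set0; [exact: fsets_set0 | rewrite fsbig_set0].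
congr ereal_sup; apply/seteqP; split => x /=.
  move=> [A [fA AS] <-]; exists (\sum_(a \in A) f a)%E; first by exists A.
  by rewrite fsum_distr // => a /AS /f0.
move=> [y [A [fA AS] <-] <-]; exists A => //.
by rewrite fsum_distr // => a /AS /f0.
Qed.

Section Main.
Variables (R : realType) (n : nat) (e : rel 'I_n).
Hypothesis e_sym : symmetric e.
Hypothesis no_isolated : forall v : 'I_n, (0 < vdeg e v)%N.
Variables (lam p : R).
Hypotheses (lam_ge0 : 0 <= lam) (lam_le1 : lam <= 1) (p_gt0 : 0 < p) (p_lt1 : p < 1).

Implicit Types (s : seq 'I_n) (h i x y : 'I_n).
Let d (v : 'I_n) : R := (vdeg e v)%:R.
Let d_gt0 v : 0 < d v. Proof. by rewrite /d ltr0n. Qed.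
Local Notation W := (walk_prob e p).

Lemma q_ge0 : 0 <= 1 - p. Proof. by rewrite subr_ge0 ltW. Qed.

Lemma W_ge0 h s : 0 <= W h s.
Proof.
case: s => [|j1 rest] /=; first by [].
case: ifP => // _; rewrite !mulr_ge0 ?exprn_ge0 ?q_ge0 ?(ltW p_gt0) //.
by apply: prodr_ge0 => j _; rewrite invr_ge0 ler0n.
Qed.

Lemma freq_ge0 s i : 0 <= freq lam s i.
Proof. by apply: sumr_ge0 => r _; rewrite exprn_ge0. Qed.

Lemma freq_cons x s i : freq lam (x :: s) i = (x == i)%:R + lam * freq lam s i.
Proof.
rewrite /freq /= big_mkcond big_ord_recl /= expr0.
congr (_ + _); first by case: (x == i).
rewrite mulr_sumr [RHS]big_mkcond /=; apply: eq_bigr => r _.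
by case: ifP => _; rewrite ?mulr0 // exprS.
Qed.

Lemma W_nil h : W h [::] = 0. Proof. by []. Qed.

Lemma W_single h x : W h [:: x] = (x == h)%:R * p.
Proof.
rewrite /W /walk_prob /= andbT; case: (x == h); last by rewrite mul0r.
rewrite expr0 big_nil /=; ring.
Qed.

Lemma W_head h x s : x != h -> W h (x :: s) = 0.
Proof. by rewrite /W /walk_prob /= => /negPf ->. Qed.

Lemma W_cons2 h x y s :
  W h (x :: y :: s) = (x == h)%:R * ((e x y)%:R * ((1 - p) / d x) * W y (y :: s)).
Proof.
rewrite /W /walk_prob /= eqxx /=.
case: (x == h); last by rewrite mul0r.
rewrite mul1r; case: (e x y) => /=; last by rewrite !mul0r.
rewrite mul1r; case: (path e y s); last by rewrite mulr0.
rewrite big_cons exprS /d; ring.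
Qed.


Definition B (t : nat) : set (seq 'I_n) := size @^-1` [set t].

Lemma esum_head (g : seq 'I_n -> R) t h : (forall s, 0 <= g s) ->
  (\esum_(s in B t.+1) (W h s * g s)%:E =
   \esum_(s in B t) (W h (h :: s) * g (h :: s))%:E)%E.
Proof.
move=> g0.
rewrite (esumID (cons h @` B t)); last by move=> s _; rewrite lee_fin mulr_ge0 ?W_ge0.
rewrite [X in (_ + X)%E]esum1 ?adde0; last first.
  move=> [|x s] [/= Hs Hn]; first by move: Hs; rewrite /B /=.
  case: (eqVneq x h) => [xh|xh]; last by rewrite /= mul0r.
  exfalso; apply: Hn; exists s; last by rewrite xh.
  by move: Hs; rewrite /B /= => -[].
rewrite (_ : B t.+1 `&` _ = cons h @` B t); last first.
  apply/seteqP; split => s; first by move=> [].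
  move=> [s' Hs' <-]; split; last by exists s'.
  by move: Hs'; rewrite /B /preimage /set1 /= => ->.
by rewrite esum_image // => s1 s2 _ _ [].
Qed.

Lemma esum_step (g : seq 'I_n -> R) t h : (forall s, 0 <= g s) ->
  (\esum_(s in B t.+2) (W h s * g s)%:E =
   \sum_y ((e h y)%:R * ((1 - p) / d h))%:E *
      \esum_(s in B t.+1) (W y s * g (h :: s))%:E)%E.
Proof.
move=> g0; rewrite esum_head //.
have c0 y : 0 <= (e h y)%:R * ((1 - p) / d h).
  by rewrite mulr_ge0 // divr_ge0 ?q_ge0 // ltW.
rewrite (eq_esum (b := fun s => \sum_y (((e h y)%:R * ((1 - p) / d h))%:E *
          (W y s * g (h :: s))%:E)%E)); last first.
  move=> [|y0 s] Hs; first by move: Hs; rewrite /B /=.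
  rewrite (bigD1 y0) // big1 ?adde0; last first.
    by move=> y yy0; rewrite W_head 1?eq_sym // mul0r mule0.
  by rewrite W_cons2 eqxx mul1r -EFinM; congr EFin; ring.
rewrite esum_sum; last by move=> s y _ _; rewrite -EFinM lee_fin mulr_ge0 // mulr_ge0 ?W_ge0.
by apply: eq_bigr => y _; rewrite esumZl // => s _; rewrite lee_fin mulr_ge0 ?W_ge0.
Qed.

Definition Pm : 'M[R]_n := \matrix_(i, j) ((e i j)%:R / d i).
Definition Lm : 'M[R]_n := lam *: Pm.

Lemma Pm_rowsum h : \sum_y Pm h y = 1.
Proof.
have -> : \sum_y Pm h y = (\sum_y ((e h y)%:R : R)) / d h.
  by rewrite mulr_suml; apply: eq_bigr => y _; rewrite mxE.
suff -> : \sum_y ((e h y)%:R : R) = d h by rewrite divff // gt_eqF.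
rewrite /d /vdeg -sumr_const [RHS]big_mkcond /=; apply: eq_bigr => y _.
by rewrite inE; case: (e h y).
Qed.

Lemma B0 : B 0 = [set [::]].
Proof.
by apply/seteqP; split => s; rewrite /B /preimage /set1 /=; [move/size0nil | move=> ->].
Qed.

Lemma M_closed t h :
  (\esum_(s in B t.+1) (W h s * 1)%:E = (p * (1 - p) ^+ t)%:E)%E.
Proof.
elim: t h => [|t IH] h.
  rewrite (esum_head (fun _ => 1)) // B0 esum_set1; last by rewrite lee_fin mulr1 W_ge0.
  by rewrite W_single eqxx expr0; congr EFin; rewrite /=; ring.
rewrite (esum_step (fun _ => 1)) //.
under eq_bigr do rewrite IH -EFinM.
rewrite sumEFin; congr EFin.
transitivity ((\sum_y Pm h y) * ((1 - p) * (p * (1 - p) ^+ t))).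
  by rewrite mulr_suml; apply: eq_bigr => y _; rewrite mxE; ring.
by rewrite Pm_rowsum exprS; ring.
Qed.

Lemma v_step t h i : \sum_(r < t.+2) (Lm ^+ r) h i =
  (h == i)%:R + \sum_y lam * Pm h y * \sum_(r < t.+1) (Lm ^+ r) y i.
Proof.
rewrite big_ord_recl expr0 mxE; congr (_ + _).
transitivity (\sum_(r < t.+1) \sum_y Lm h y * (Lm ^+ r) y i).
  by apply: eq_bigr => r _; rewrite /= exprS -mulmxE mxE.
rewrite exchange_big /=; apply: eq_bigr => y _.
by rewrite mulr_sumr /Lm mxE.
Qed.

Lemma E_closed t h i :
  (\esum_(s in B t.+1) (W h s * freq lam s i)%:E =
   (p * (1 - p) ^+ t * \sum_(r < t.+1) (Lm ^+ r) h i)%:E)%E.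
Proof.
have F0 : freq lam [::] i = 0 by rewrite /freq big_ord0.
elim: t h => [|t IH] h.
  rewrite (esum_head _ _ _ (fun s => freq_ge0 s i)) B0 esum_set1; last first.
    by rewrite lee_fin mulr_ge0 ?W_ge0 ?freq_ge0.
  rewrite W_single eqxx freq_cons F0 big_ord1 expr0 mxE; congr EFin; rewrite /=; ring.
rewrite (esum_step _ _ _ (fun s => freq_ge0 s i)).
have inner y : (\esum_(s in B t.+1) (W y s * freq lam (h :: s) i)%:E =
    ((h == i)%:R * (p * (1 - p) ^+ t) +
     lam * (p * (1 - p) ^+ t * \sum_(r < t.+1) (Lm ^+ r) y i))%:E)%E.
  rewrite (eq_esum (b := fun s => (((h == i)%:R)%:E * (W y s * 1)%:E +
       lam%:E * (W y s * freq lam s i)%:E)%E)); last first.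
    by move=> s _; rewrite freq_cons -!EFinM -EFinD; congr EFin; ring.
  rewrite esumD; last 2 first.
  - by move=> s _; rewrite -EFinM lee_fin mulr_ge0 // mulr_ge0 ?W_ge0.
  - by move=> s _; rewrite -EFinM lee_fin mulr_ge0 // mulr_ge0 ?W_ge0 ?freq_ge0.
  rewrite !esumZl //; last 2 first.
  - by move=> s _; rewrite lee_fin mulr_ge0 ?W_ge0 ?freq_ge0.
  - by move=> s _; rewrite lee_fin mulr_ge0 ?W_ge0 ?freq_ge0.
  by rewrite M_closed IH -!EFinM -EFinD.
under eq_bigr do rewrite inner -EFinM.
rewrite sumEFin; congr EFin; rewrite v_step.
set a := p * (1 - p) ^+ t.
transitivity (\sum_y (((1 - p) * a * (h == i)%:R) * Pm h y +
   ((1 - p) * a) * (lam * Pm h y * \sum_(r < t.+1) (Lm ^+ r) y i))).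
  by apply: eq_bigr => y _; rewrite mxE; ring.
by rewrite big_split /= -!mulr_sumr Pm_rowsum /a exprS; ring.
Qed.

Lemma Pm_nn i j : 0 <= Pm i j.
Proof. by rewrite mxE divr_ge0 // ltW. Qed.

Lemma Lm_nn k i j : 0 <= (Lm ^+ k) i j.
Proof. by apply: mxnn_exp => a b; rewrite mxE mulr_ge0 ?Pm_nn. Qed.

Lemma Ef_closed h i :
  exp_freq e p lam h i = (\sum_(r <oo) ((1 - p) ^+ r * (Lm ^+ r) h i)%:E)%E.
Proof.
rewrite /exp_freq (_ : [set: seq 'I_n] = \bigcup_t B t); last first.
  by apply/seteqP; split => s // _; exists (size s).
rewrite nneseries_sum_bigcup; last 2 first.
- exact: trivIset_preimage1.
- by move=> s; rewrite lee_fin mulr_ge0 ?W_ge0 ?freq_ge0.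
rewrite nneseries_recl //; last by move=> k _; apply: esum_ge0 => s _; rewrite lee_fin mulr_ge0 ?W_ge0 ?freq_ge0.
rewrite B0 esum_set1; last by rewrite lee_fin mulr_ge0 ?W_ge0 ?freq_ge0.
rewrite W_nil mul0r add0e -nneseries_addn; last first.
  by move=> k; apply: esum_ge0 => s _; rewrite lee_fin mulr_ge0 ?W_ge0 ?freq_ge0.
under eq_eseriesr do rewrite addn1 E_closed.
set x := fun r => (Lm ^+ r) h i.
have x0 r : 0 <= x r by exact: Lm_nn.
transitivity (\sum_(t <oo) \sum_(r <oo)
   (if (r <= t)%N then (p * (1 - p) ^+ t * x r)%:E else 0%E))%E.
  apply: eq_eseriesr => t _; rewrite ser_fin_supp; last first.
    by move=> r; rewrite lee_fin mulr_ge0 // mulr_ge0 ?exprn_ge0 ?q_ge0 // ltW.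
  by rewrite sumEFin mulr_sumr.
rewrite nneseries_interchange; last first.
  by move=> t r; case: ifP => // _; rewrite lee_fin mulr_ge0 // mulr_ge0 ?exprn_ge0 ?q_ge0 // ltW.
apply: eq_eseriesr => r _.
transitivity (\sum_(u <oo) (p * (1 - p) ^+ (u + r) * x r)%:E)%E.
  rewrite -(@ser_shift R (fun u => (p * (1 - p) ^+ (u + r) * x r)%:E) r); last first.
    by move=> u; rewrite lee_fin mulr_ge0 // mulr_ge0 ?exprn_ge0 ?q_ge0 // ltW.
  by apply: eq_eseriesr => t _; case: ifP => // rt; rewrite subnK.
transitivity (\sum_(u <oo) (((1 - p) ^+ r * x r)%:E * (p * (1 - p) ^+ u)%:E))%E.
  by apply: eq_eseriesr => u _; rewrite -EFinM exprD; congr EFin; ring.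
rewrite nneseriesZl; last by move=> u _; rewrite lee_fin mulr_ge0 ?exprn_ge0 ?q_ge0 // ltW.
by rewrite ser_geom // mule1.
Qed.

Definition rho := (1 - p) * lam.
Definition Qm : 'M[R]_n := rho *: Pm.

Lemma rho_ge0 : 0 <= rho.
Proof. by rewrite /rho mulr_ge0 ?q_ge0. Qed.

Lemma Qm_exp r h i : (1 - p) ^+ r * (Lm ^+ r) h i = (Qm ^+ r) h i.
Proof. by rewrite /Qm /rho /Lm -scalerA !scale_exp !mxE. Qed.

Lemma Qm_nn0 i j : 0 <= Qm i j.
Proof. by rewrite mxE mulr_ge0 ?rho_ge0 ?Pm_nn. Qed.

Lemma Qm_nn r i j : 0 <= (Qm ^+ r) i j.
Proof. exact: (@mxnn_exp R n Qm r Qm_nn0 i j). Qed.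

Lemma Ef' h i : exp_freq e p lam h i = (\sum_(r <oo) ((Qm ^+ r) h i)%:E)%E.
Proof. by rewrite Ef_closed; apply: eq_eseriesr => r _; rewrite Qm_exp. Qed.

Lemma K_closed k l : rw_kernel e p lam k l =
  (\sum_(m <oo) (\sum_(r < m.+1) (Qm ^+ r *m (Qm ^+ (m - r))^T) k l)%:E)%E.
Proof.
rewrite /rw_kernel.
under eq_bigr => i _ do rewrite !Ef' (@ser_mul R _ _ (fun r => Qm_nn r k i) (fun u => Qm_nn u l i)).
rewrite -nneseries_sum; last first.
  by move=> i r _; apply: nneseries_ge0 => s _ _; rewrite lee_fin mulr_ge0 ?Qm_nn.
transitivity (\sum_(r <oo) \sum_(s <oo) ((Qm ^+ r *m (Qm ^+ s)^T) k l)%:E)%E.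
  apply: eq_eseriesr => r _; rewrite -nneseries_sum; last first.
    by move=> i s _; rewrite lee_fin mulr_ge0 ?Qm_nn.
  apply: eq_eseriesr => s _; rewrite sumEFin mxE; congr EFin.
  by apply: eq_bigr => i _; rewrite mxE.
rewrite ser_diag; last by move=> r s; rewrite lee_fin mxE sumr_ge0 // => i _; rewrite mxE mulr_ge0 ?Qm_nn.
by apply: eq_eseriesr => m _; rewrite sumEFin.
Qed.

Let dM : R := (max_deg e)%:R.
Let dm : R := (min_deg e)%:R.

Lemma d_le_dM v : d v <= dM.
Proof. by rewrite /d /dM ler_nat /max_deg (leq_bigmax v). Qed.

Lemma dm_le_d v : dm <= d v.
Proof. by rewrite /d /dm ler_nat /min_deg bigmin_le // mem_index_enum. Qed.

Lemma dm_gt0 (v : 'I_n) : 0 < dm.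
Proof.
rewrite /dm ltr0n /min_deg; elim/big_ind: _.
- exact: leq_trans (no_isolated v) (leq_bigmax v).
- by move=> x y x0 y0; rewrite leq_min x0.
- by move=> u _; exact: no_isolated.
Qed.

Lemma entry_le (r x a b : R) : 0 <= r -> 0 <= x -> 0 < a -> a <= b ->
  r / b * x <= r * (x / a).
Proof.
move=> r0 x0 a0 ab.
have b0 : 0 < b by exact: lt_le_trans ab.
rewrite (_ : r / b * x = (r * x) * b^-1); last by ring.
rewrite (_ : r * (x / a) = (r * x) * a^-1); last by ring.
by rewrite ler_wpM2l ?mulr_ge0 // lef_pV2 ?posrE.
Qed.

Lemma entry_le2 (r x a b : R) : 0 <= r -> 0 <= x -> 0 < a -> a <= b ->
  r * (x / b) <= r / a * x.
Proof.
move=> r0 x0 a0 ab.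
have b0 : 0 < b by exact: lt_le_trans ab.
rewrite (_ : r / a * x = (r * x) * a^-1); last by ring.
rewrite (_ : r * (x / b) = (r * x) * b^-1); last by ring.
by rewrite ler_wpM2l ?mulr_ge0 // lef_pV2 ?posrE.
Qed.

Let Ac (c : R) : 'M[R]_n := c *: @adjmx n e R.

Lemma Ac_nn c : 0 <= c -> forall i j, 0 <= Ac c i j.
Proof. by move=> c0 i j; rewrite !mxE mulr_ge0 ?ler0n. Qed.

Lemma QT_entry i j : Qm^T i j = rho * ((e i j)%:R / d j).
Proof. by rewrite !mxE e_sym. Qed.

Lemma Q_entry i j : Qm i j = rho * ((e i j)%:R / d i).
Proof. by rewrite !mxE. Qed.

Lemma lower_bound k l :
  (Gamma_adj e (rho / dM) k l <= rw_kernel e p lam k l)%E.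
Proof.
have dM0 : 0 < dM by exact: lt_le_trans (d_gt0 k) (d_le_dM k).
have c0 : 0 <= rho / dM by rewrite divr_ge0 ?rho_ge0 // ltW.
have A0 := Ac_nn _ c0.
have AQ i j : Ac (rho / dM) i j <= Qm i j.
  by rewrite Q_entry !mxE entry_le ?rho_ge0 ?ler0n ?d_gt0 ?d_le_dM.
have AQT i j : Ac (rho / dM) i j <= Qm^T i j.
  by rewrite QT_entry !mxE entry_le ?rho_ge0 ?ler0n ?d_gt0 ?d_le_dM.
rewrite K_closed /Gamma_adj; apply: lee_nneseries.
  by move=> m _ _; rewrite lee_fin mulr_ge0 ?ler0n // (@mxnn_exp R n).
move=> m _; rewrite lee_fin.
have -> : (m.+1)%:R * (((rho / dM) *: @adjmx n e R) ^+ m) k l =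
    \sum_(r < m.+1) ((((rho / dM) *: @adjmx n e R) ^+ m) k l).
  by rewrite sumr_const card_ord mulr_natl.
apply: ler_sum => r _.
have rm : (r <= m)%N by rewrite -ltnS ltn_ord.
rewrite (_ : ((rho / dM) *: @adjmx n e R) ^+ m = ((rho / dM) *: @adjmx n e R) ^+ r *m ((rho / dM) *: @adjmx n e R) ^+ (m - r)); last by rewrite mulmxE -exprD subnKC.
apply: (@mxle_mul R n) => //.
- exact: (@mxnn_exp R n).
- exact: (@mxnn_exp R n).
- exact: (@mxle_exp R n).
- by move=> i j; rewrite trmxX; apply: (@mxle_exp R n).
Qed.

Lemma upper_bound k l :
  (rw_kernel e p lam k l <= Gamma_adj e (rho / dm) k l)%E.
Proof.
have dm0 : 0 < dm by exact: dm_gt0 k.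
have c0 : 0 <= rho / dm by rewrite divr_ge0 ?rho_ge0 // ltW.
have QA i j : Qm i j <= Ac (rho / dm) i j.
  by rewrite Q_entry !mxE entry_le2 ?rho_ge0 ?ler0n ?dm_le_d.
have QTA i j : Qm^T i j <= Ac (rho / dm) i j.
  by rewrite QT_entry !mxE entry_le2 ?rho_ge0 ?ler0n ?dm_le_d.
have QT0 i j : 0 <= Qm^T i j by rewrite mxE Qm_nn0.
rewrite K_closed /Gamma_adj; apply: lee_nneseries.
  by move=> m _ _; rewrite lee_fin sumr_ge0 // => r _; rewrite mxE sumr_ge0 // => y _; rewrite mxE mulr_ge0 ?Qm_nn.
move=> m _; rewrite lee_fin.
have -> : (m.+1)%:R * (((rho / dm) *: @adjmx n e R) ^+ m) k l =
    \sum_(r < m.+1) ((((rho / dm) *: @adjmx n e R) ^+ m) k l).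
  by rewrite sumr_const card_ord mulr_natl.
apply: ler_sum => r _.
have rm : (r <= m)%N by rewrite -ltnS ltn_ord.
rewrite (_ : ((rho / dm) *: @adjmx n e R) ^+ m = ((rho / dm) *: @adjmx n e R) ^+ r *m ((rho / dm) *: @adjmx n e R) ^+ (m - r)); last by rewrite mulmxE -exprD subnKC.
apply: (@mxle_mul R n) => //.
- exact: Qm_nn.
- by move=> i j; rewrite trmxX; apply: (@mxnn_exp R n).
- exact: (@mxle_exp R n _ _ r Qm_nn0 QA).
- by move=> i j; rewrite trmxX; apply: (@mxle_exp R n _ _ _ QT0 QTA).
Qed.

End Main.

Theorem theorem4p2 (R : realType) (n : nat) (e : rel 'I_n)
  (e_sym : symmetric e) (e_irr : irreflexive e)
  (no_isolated : forall v : 'I_n, (0 < vdeg e v)%N)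
  (lam p : R) (lam_ge0 : 0 <= lam) (lam_le1 : lam <= 1)
  (p_gt0 : 0 < p) (p_lt1 : p < 1) :
  forall k l : 'I_n,
    (Gamma_adj e ((1 - p) * lam / (max_deg e)%:R)%R k l <= rw_kernel e p lam k l)%E /\
    (rw_kernel e p lam k l <= Gamma_adj e ((1 - p) * lam / (min_deg e)%:R)%R k l)%E.
Proof.
move=> k l; split.
- exact: (lower_bound R n e e_sym no_isolated lam p lam_ge0 p_gt0 p_lt1 k l).
- exact: (upper_bound R n e e_sym no_isolated lam p lam_ge0 p_gt0 p_lt1 k l).
Qed.
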